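(* A graph $G=(V,E)$ is $(1,1)$-well-covered if and only if there is a positive integer $k$ and a partition $V=(S,K)$ with $S$ an independent set, $K$ a clique and $|K|=k$, such that the degree sequence of $G$ (listing first the $k$ vertices of $K$ and then the vertices of $S$) is either $(k,k,\ldots,k,i_1,i_2,\ldots,i_s,0,0,\ldots,0)$ with $\sum_{j=1}^s i_j = k$, or $(k-1,k-1,\ldots,k-1,0,0,\ldots,0)$, where the initial blocks $k,\ldots,k$ (resp. $k-1,\ldots,k-1$) have length $k$.
   Context: A $(1,1)$-partition of $G$ is a partition of $V(G)$ into an independent set and a clique. A graph is well-covered if all its maximal independent sets have the same cardinality; it is $(1,1)$-well-covered if it admits a $(1,1)$-partition and is well-covered. *)

(* Defs.v *)
From mathcomp Require Import all_boot.
Set Implicit Arguments. Unset Strict Implicit. Unset Printing Implicit Defensive.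

Section Graphs.
Variables (T : finType) (e : rel T).

Definition simple_graph : Prop := symmetric e /\ irreflexive e.

Definition independent (A : {set T}) : bool :=
  [forall x in A, forall y in A, ~~ e x y].

Definition clique (K : {set T}) : bool :=
  [forall x in K, forall y in K, (x != y) ==> e x y].

Definition maximal_independent (A : {set T}) : bool :=
  maxset independent A.

Definition well_covered : Prop :=
  forall A B : {set T}, maximal_independent A -> maximal_independent B ->
    #|A| = #|B|.

Definition partition11 (S K : {set T}) : bool :=
  [&& S :|: K == [set: T], [disjoint S & K], independent S & clique K].

Definition has_partition11 : Prop := exists S K, partition11 S K.

Definition well_covered11 : Prop := has_partition11 /\ well_covered.

Definition deg (v : T) : nat := #|[set u | e v u]|.

End Graphs.

(* Main.v *)
Require Import Defs.
From mathcomp Require Import all_boot.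
From mathcomp Require Import zify.
Set Implicit Arguments. Unset Strict Implicit. Unset Printing Implicit Defensive.

Section Work.
Variables (T : finType) (e : rel T).
Hypothesis esy : symmetric e.
Hypothesis eir : irreflexive e.

Lemma indepP (A : {set T}) x y : independent e A -> x \in A -> y \in A -> ~~ e x y.
Proof. by move=> /forallP /(_ x) /implyP H /H /forallP /(_ y) /implyP H2 /H2. Qed.

Lemma cliqueP (A : {set T}) x y : clique e A -> x \in A -> y \in A -> x != y -> e x y.
Proof.
by move=> /forallP /(_ x) /implyP H /H /forallP /(_ y) /implyP H2 /H2 /implyP.
Qed.

Lemma indep_sub (A B : {set T}) : B \subset A -> independent e A -> independent e B.
Proof.
move=> sBA hA; apply/forallP => x; apply/implyP => hx; apply/forallP => y.
apply/implyP => hy; apply: (indepP hA); exact: (subsetP sBA).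
Qed.

Lemma card_sep (A : {set T}) (P : pred T) :
  #|[set w in A | P w]| = \sum_(w in A) (P w : nat).
Proof.
rewrite -sum1_card [LHS]big_mkcond [RHS]big_mkcond /=.
by apply: eq_bigr => w _; rewrite !inE; case: (w \in A); case: (P w).
Qed.

Variables S K : {set T}.
Hypothesis hP : partition11 e S K.

Let hU : S :|: K = setT. Proof. by case/and4P: hP => /eqP. Qed.
Let hD : [disjoint S & K]. Proof. by case/and4P: hP. Qed.
Let hI : independent e S. Proof. by case/and4P: hP. Qed.
Let hC : clique e K. Proof. by case/and4P: hP. Qed.

Lemma inSK x : (x \in S) || (x \in K).
Proof. have : x \in S :|: K by rewrite hU inE.
by rewrite inE. Qed.

Lemma notSK x : x \in S -> x \notin K.
Proof. by move=> hx; rewrite (disjointFr hD hx). Qed.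

Lemma notKS x : x \in K -> x \notin S.
Proof. by move=> hx; apply/negP => /notSK; rewrite hx. Qed.

Definition NS v := [set u in S | e v u].
Definition Av v := v |: (S :\: NS v).

Lemma NS_sub v : NS v \subset S.
Proof. by apply/subsetP => u; rewrite inE => /andP[]. Qed.

Lemma Av_indep v : v \in K -> independent e (Av v).
Proof.
move=> hv; apply/forallP => x; apply/implyP => hx; apply/forallP => y.
apply/implyP => hy.
move: hx hy; rewrite !inE => /orP[/eqP->|/andP[hx1 hx2]] /orP[/eqP->|/andP[hy1 hy2]].
- by rewrite eir.
- by move: hy1; rewrite hy2.
- by rewrite esy; move: hx1; rewrite hx2.
- exact: (indepP hI).
Qed.

Lemma Av_max v : v \in K -> maximal_independent e (Av v).
Proof.
move=> hv; apply/maxsetP; split; first exact: Av_indep.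
move=> B hB sAB; apply/eqP; rewrite eqEsubset sAB andbT.
have vB : v \in B by apply: (subsetP sAB); rewrite !inE eqxx.
apply/subsetP => x hx.
case/orP: (inSK x) => hxS.
- case hN: (x \in NS v).
  + move: hN; rewrite inE hxS /= => hvx.
    by move: (indepP hB vB hx); rewrite hvx.
  + by move: hN; rewrite !inE hxS /= => ->; rewrite orbT.
- case: (eqVneq x v) => [->|hxv]; first by rewrite !inE eqxx.
  by move: (indepP hB hx vB); rewrite (cliqueP hC hxS hv hxv).
Qed.

Lemma S_max : (forall v, v \in K -> NS v != set0) -> maximal_independent e S.
Proof.
move=> hne; apply/maxsetP; split; first exact: hI.
move=> B hB sSB; apply/eqP; rewrite eqEsubset sSB andbT.
apply/subsetP => x hx.
case/orP: (inSK x) => // hxK.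
case/set0Pn: (hne x hxK) => u; rewrite inE => /andP[huS hxu].
by move: (indepP hB hx (subsetP sSB u huS)); rewrite hxu.
Qed.

Lemma max_cases A : maximal_independent e A -> A = S \/ exists2 v, v \in K & A = Av v.
Proof.
move/maxsetP => [hA hmax].
case: (set_0Vmem (A :&: K)) => [h0|[v]]; last first.
- rewrite inE => /andP[vA vK]; right; exists v => //.
  have sub : A \subset Av v.
    apply/subsetP => x hx.
    case/orP: (inSK x) => hxS.
    + rewrite !inE hxS /= andbT; apply/orP; right.
      exact: (indepP hA vA hx).
    + case: (eqVneq x v) => [->|hxv]; first by rewrite !inE eqxx.
      by move: (indepP hA hx vA); rewrite (cliqueP hC hxS vK hxv).
  by apply/esym/hmax => //; exact: Av_indep.
- left.
  have sub : A \subset S.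
    apply/subsetP => x hx; case/orP: (inSK x) => // hxK.
    by move/setP: h0 => /(_ x); rewrite !inE hx hxK.
  by apply/esym/hmax.
Qed.

Lemma card_Av v : v \in K -> #|Av v| = (#|S| - #|NS v|).+1.
Proof.
move=> hv; rewrite cardsU1 cardsD (setIidPr (NS_sub v)).
by rewrite !inE (negbTE (notKS hv)).
Qed.

Lemma deg_K v : v \in K -> deg e v = #|K|.-1 + #|NS v|.
Proof.
move=> hv; rewrite /deg.
have -> : [set u | e v u] = (K :\ v) :|: NS v.
  apply/setP => u; rewrite !inE.
  case/orP: (inSK u) => hu.
  - by rewrite hu (negbTE (notSK hu)) andbF.
  - rewrite hu (negbTE (notKS hu)) /= orbF andbT.
    case: (eqVneq u v) => [->|huv]; first by rewrite eir.
    by rewrite (cliqueP hC hv hu) // eq_sym.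
have hI0 : (K :\ v) :&: NS v = set0.
  apply/setP => u; rewrite !inE.
  by case hu: (u \in K); rewrite ?andbF //= (negbTE (notKS hu)) !andbF.
have := cardsUI (K :\ v) (NS v); rewrite hI0 cards0 addn0 => ->.
by rewrite (cardsD1 v K) hv.
Qed.

Lemma deg_S u : u \in S -> deg e u = #|[set w in K | e u w]|.
Proof.
move=> hu; rewrite /deg; apply: eq_card => w; rewrite !inE.
case/orP: (inSK w) => hw.
- by rewrite (negbTE (indepP hI hu hw)) (negbTE (notSK hw)).
- by rewrite hw.
Qed.

Lemma deg_S0 u : (forall v, v \in K -> NS v = set0) -> u \in S -> deg e u = 0.
Proof.
move=> h0 hu; rewrite deg_S //; apply/eqP; rewrite cards_eq0; apply/eqP.
apply/setP => w; rewrite !inE; apply/negbTE; apply/negP => /andP[hw huw].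
by move: (h0 w hw) => /setP /(_ u); rewrite !inE hu esy huw.
Qed.

Lemma sum_S : \sum_(u in S) deg e u = \sum_(v in K) #|NS v|.
Proof.
rewrite (eq_bigr (fun u => \sum_(w in K) (e u w : nat))); last first.
  by move=> u hu; rewrite deg_S // card_sep.
rewrite exchange_big; apply: eq_bigr => v _.
by rewrite /NS card_sep; apply: eq_bigr => u _; rewrite esy.
Qed.

End Work.

Lemma wc_of (T : finType) (e : rel T) c :
  (forall A, maximal_independent e A -> #|A| = c) -> well_covered e.
Proof. by move=> h A B hA hB; rewrite (h A hA) (h B hB). Qed.

Theorem lemma4 (T : finType) (e : rel T) :
  simple_graph e -> 0 < #|T| ->
  well_covered11 e <->
  exists (k : nat) (S K : {set T}),
    [/\ 0 < k, partition11 e S K, #|K| = k &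
      ((forall v, v \in K -> deg e v = k) /\ \sum_(v in S) deg e v = k
       \/
       (forall v, v \in K -> deg e v = k.-1) /\ (forall v, v \in S -> deg e v = 0))].
Proof.
move=> [esym eirr] hT; split.
- move=> [[S [K hP]] wc].
  have hP' := hP; case/and4P: hP' => /eqP hU hD hI hC.
  case: (eqVneq K set0) => [K0|Kn0].
  + rewrite K0 setU0 in hU; subst S.
    have noE : forall x y, ~~ e x y by move=> x y; apply: (indepP hI); rewrite inE.
    case/card_gt0P: hT => x _.
    exists 1, (setT :\ x), [set x]; split => //.
    * apply/and4P; split.
      -- by apply/eqP/setP => y; rewrite !inE; case: (eqVneq y x).
      -- by rewrite disjoint_sym disjoints1 !inE eqxx.
      -- by apply: (indep_sub _ hI); apply: subsetT.
      -- by apply/forallP => a; apply/implyP; rewrite inE => /eqP->;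
            apply/forallP => b; apply/implyP; rewrite inE => /eqP->; rewrite eqxx.
    * by rewrite cards1.
    * right; split => v _; apply/eqP; rewrite cards_eq0; apply/eqP/setP => y;
        by rewrite !inE (negbTE (noE v y)).
  + have kpos : 0 < #|K| by rewrite card_gt0.
    exists #|K|, S, K; split => //.
    case: (boolP [exists v in K, NS e S v == set0]).
    * case/exists_inP => v1 hv1 /eqP h1.
      have h0 : forall w, w \in K -> NS e S w = set0.
        move=> w hw; apply: cards0_eq.
        have := wc _ _ (Av_max esym eirr hP hw) (Av_max esym eirr hP hv1).
        rewrite !(card_Av hP) // h1 cards0.
        have := subset_leq_card (NS_sub e S w); lia.
      right; split => v hv.
      -- by rewrite (deg_K eirr hP hv) h0 // cards0 addn0.
      -- exact: (deg_S0 esym hP h0).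
    * rewrite negb_exists_in => /forall_inP hne.
      have h1 : forall w, w \in K -> #|NS e S w| = 1.
        move=> w hw.
        have := wc _ _ (Av_max esym eirr hP hw) (S_max hP hne).
        rewrite (card_Av hP) //.
        have := subset_leq_card (NS_sub e S w).
        have : 0 < #|NS e S w| by rewrite card_gt0; exact: hne.
        lia.
      left; split.
      -- by move=> v hv; rewrite (deg_K eirr hP hv) h1 //; lia.
      -- rewrite (sum_S esym hP) (eq_bigr (fun _ => 1)); last by move=> v hv; rewrite h1.
         by rewrite sum1_card.
- move=> [k [S [K [hk hP hK hcase]]]].
  split; first by exists S, K.
  case: hcase => [[hKd _]|[hKd hSd]].
  + have h1 : forall w, w \in K -> #|NS e S w| = 1.
      by move=> w hw; have := hKd w hw; rewrite (deg_K eirr hP hw) hK; lia.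
    apply: (@wc_of _ _ #|S|) => A hA.
    case: (max_cases esym eirr hP hA) => [->//|[v hv ->]].
    rewrite (card_Av hP) // h1 //.
    have := subset_leq_card (NS_sub e S v); rewrite h1 //; lia.
  + have h0 : forall w, w \in K -> #|NS e S w| = 0.
      by move=> w hw; have := hKd w hw; rewrite (deg_K eirr hP hw) hK; lia.
    apply: (@wc_of _ _ #|S|.+1) => A hA.
    case: (max_cases esym eirr hP hA) => [hAS|[v hv ->]]; last by rewrite (card_Av hP) // h0 // subn0.
    exfalso.
    have : 0 < #|K| by rewrite hK.
    case/card_gt0P => v hv.
    move/maxsetP: hA => [_ hmax].
    have hAv := hmax _ (Av_indep esym eirr hP hv).
    have : A \subset Av e S v.
      rewrite hAS; apply/subsetP => x hx; rewrite !inE hx /= andbT.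
      apply/orP; right; apply/negP => hxv.
      by move: (h0 v hv) => /cards0_eq /setP /(_ x); rewrite !inE hx hxv.
    move/hAv => hEq.
    have : v \in Av e S v by rewrite !inE eqxx.
    rewrite hEq hAS => hvS.
    by move: (notKS hP hv); rewrite hvS.
Qed.
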